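(* Let $d\ge 3$, $\lambda>0$, $\rho_0=o(1)$, $\mu=\rho_0/(d+\lambda)$, and let $a,b,c\ge0$ be a trajectory of \[ \dot a=-2\,\mathrm{sgn}(g_{w_\star})\sqrt a,\quad \dot b=-2\,\mathrm{sgn}(g_v)\sqrt b,\quad \dot c=-2\,\mathrm{sgn}(g_\perp)\sqrt c, \] with $a(0)=b(0)=c(0)=\mu$, where $r=a+(1+\lambda)b+(d-2)c$, $g_{w_\star}=4(r+2a-3)$, $g_v=4(1+\lambda)(r+2(1+\lambda)b-1)$, $g_\perp=4(r+2c-1)$, $\mathrm{sgn}(0)=0$. Fix $\rho\in(0,1/12)$ and let $T_2'=\inf\{t\ge0:a(t)\ge\rho\}$. Then for all $t\ge T_2'$, \[ a(t)\ge\rho,\quad b(t)\le\frac{1}{3(1+\lambda)},\quad (d-2)c(t)^2\le\frac1{d-2}, \] and consequently \[ 1-\mathrm{Align}(t)\le\frac{1}{2\rho^2}\Big(\frac{1}{9(1+\lambda)^2}+\frac{1}{d-2}\Big). \] In particular, if $d\to\infty$ and $\lambda=\lambda(d)\to\infty$, then $\sup_{t\ge T_2'}(1-\mathrm{Align}(t))\to0$.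
   Context: These ODEs describe the population spectral gradient flow $\dot W=-\mathrm{polar}(\nabla_W\mathcal L(W))$ for the phase-retrieval model $y=(x^\top w_\star)^2+\nu$, $x\sim\mathcal N(0,I_d+\lambda vv^\top)$ with $v\perp w_\star$ unit vectors, network $f_W(x)=\sum_{j=1}^d(w_j^\top x)^2$, in the coordinates $WW^\top=a\,w_\star w_\star^\top+b\,vv^\top+c(I-w_\star w_\star^\top-vv^\top)$; $\mathrm{polar}(A)=A(A^\top A)^{-1/2}$. The alignment is $\mathrm{Align}(t)=a(t)/\sqrt{a(t)^2+b(t)^2+(d-2)c(t)^2}$. $d$ is taken large. *)

(* Defs.v *)
From Stdlib Require Import Reals.
From Coquelicot Require Import Coquelicot.
Open Scope R_scope.

Definition r_fun (d : nat) (lam a b c : R) : R :=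
  a + (1 + lam) * b + (INR d - 2) * c.

Definition g_w (d : nat) (lam a b c : R) : R := 4 * (r_fun d lam a b c + 2 * a - 3).
Definition g_v (d : nat) (lam a b c : R) : R :=
  4 * (1 + lam) * (r_fun d lam a b c + 2 * (1 + lam) * b - 1).
Definition g_perp (d : nat) (lam a b c : R) : R := 4 * (r_fun d lam a b c + 2 * c - 1).

(* Set-valued sign (Filippov regularisation of sgn, with sgn(0)=0 contained
   in the value [-1,1] at the discontinuity):  s is an admissible sign of g. *)
Definition sgn_set (g s : R) : Prop :=
  (0 < g /\ s = 1) \/ (g < 0 /\ s = -1) \/ (g = 0 /\ -1 <= s <= 1).

Definition right_deriv (f : R -> R) (t l : R) : Prop :=
  filterlim (fun h => (f (t + h) - f t) / h) (at_right 0) (locally l).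

Definition trajectory (d : nat) (lam mu : R) (a b c : R -> R) : Prop :=
  a 0 = mu /\ b 0 = mu /\ c 0 = mu /\
  (forall t, 0 <= t -> 0 <= a t /\ 0 <= b t /\ 0 <= c t) /\
  (forall t, 0 < t -> continuous a t /\ continuous b t /\ continuous c t) /\
  (forall t, 0 <= t ->
     exists sa sb sc : R,
       sgn_set (g_w d lam (a t) (b t) (c t)) sa /\
       sgn_set (g_v d lam (a t) (b t) (c t)) sb /\
       sgn_set (g_perp d lam (a t) (b t) (c t)) sc /\
       right_deriv a t (-2 * sa * sqrt (a t)) /\
       right_deriv b t (-2 * sb * sqrt (b t)) /\
       right_deriv c t (-2 * sc * sqrt (c t))).

Definition mu_of (d : nat) (lam rho0 : R) : R := rho0 / (INR d + lam).

(* T_2' = inf { t >= 0 : a(t) >= rho }  (= +oo if the set is empty) *)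
Definition T2' (rho : R) (a : R -> R) : Rbar :=
  Glb_Rbar (fun s => 0 <= s /\ rho <= a s).

Definition Align (d : nat) (a b c : R -> R) (t : R) : R :=
  a t / sqrt (a t ^ 2 + b t ^ 2 + (INR d - 2) * c t ^ 2).

(* Main.v *)
Require Import Defs.
From Stdlib Require Import Reals Lra Lia.
From Coquelicot Require Import Coquelicot.
Open Scope R_scope.

Lemma ballR x e y : ball x e y -> Rabs (y - x) < e.
Proof. intros H. exact H. Qed.
Lemma ballR' x e y : Rabs (y - x) < e -> ball x e y.
Proof. intros H. exact H. Qed.

Lemma rd_eps f t l : right_deriv f t l -> forall eps, 0 < eps ->
  exists del, 0 < del /\ forall h, 0 < h < del -> Rabs ((f (t+h) - f t)/h - l) < eps.
Proof.
  intros H eps He. unfold right_deriv in H.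
  apply filterlim_locally with (eps := mkposreal eps He) in H.
  destruct H as [del Hd]. exists del. split. apply cond_pos.
  intros h [h1 h2]. apply ballR. apply Hd. apply ballR'.
  rewrite Rminus_0_r, Rabs_pos_eq; lra. exact h1.
Qed.

Lemma rd_dec f t l : right_deriv f t l -> l < 0 ->
  exists del, 0 < del /\ forall h, 0 < h < del -> f (t+h) < f t.
Proof.
  intros H Hl. destruct (rd_eps f t l H (-l)) as [del [Hd P]]; [lra|].
  exists del; split; auto. intros h Hh. specialize (P h Hh).
  apply Rabs_def2 in P. destruct P as [P1 P2].
  assert (Q : (f (t+h) - f t)/h < 0) by lra.
  assert (f (t + h) - f t < 0); [|lra].
  replace (f (t + h) - f t) with ((f (t+h) - f t)/h * h) by (field; lra).
  nra.
Qed.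

Lemma rd_inc f t l : right_deriv f t l -> 0 < l ->
  exists del, 0 < del /\ forall h, 0 < h < del -> f t < f (t+h).
Proof.
  intros H Hl. destruct (rd_eps f t l H l) as [del [Hd P]]; [lra|].
  exists del; split; auto. intros h Hh. specialize (P h Hh).
  apply Rabs_def2 in P. destruct P as [P1 P2].
  assert (Q : 0 < (f (t+h) - f t)/h) by lra.
  assert (0 < f (t + h) - f t); [|lra].
  replace (f (t + h) - f t) with ((f (t+h) - f t)/h * h) by (field; lra).
  nra.
Qed.

Lemma rd_rcont f t l : right_deriv f t l -> forall eps, 0 < eps ->
  exists del, 0 < del /\ forall h, 0 < h < del -> Rabs (f (t+h) - f t) < eps.
Proof.
  intros H eps He. destruct (rd_eps f t l H 1) as [del [Hd P]]; [lra|].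
  assert (HL : 0 < Rabs l + 1) by (pose proof (Rabs_pos l); lra).
  exists (Rmin del (eps / (Rabs l + 1))). split.
  { apply Rmin_glb_lt; auto. apply Rdiv_lt_0_compat; lra. }
  intros h [h1 h2]. 
  assert (h3 : h < del) by (eapply Rlt_le_trans; [exact h2| apply Rmin_l]).
  assert (h4 : h < eps / (Rabs l + 1)) by (eapply Rlt_le_trans; [exact h2| apply Rmin_r]).
  specialize (P h (conj h1 h3)).
  set (q := (f (t + h) - f t) / h) in *.
  assert (E : f (t+h) - f t = q * h) by (unfold q; field; lra).
  rewrite E, Rabs_mult, (Rabs_pos_eq h) by lra.
  assert (Rabs q < Rabs l + 1).
  { pose proof (Rabs_triang_inv q l). lra. }
  apply Rmult_lt_compat_r with (r := Rabs l + 1) in h4; [|lra].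
  replace (eps / (Rabs l + 1) * (Rabs l + 1)) with eps in h4 by (field; lra).
  pose proof (Rabs_pos q). nra.
Qed.

Lemma cont_eps f u : continuous f u -> forall eps, 0 < eps ->
  exists del, 0 < del /\ forall y, Rabs (y - u) < del -> Rabs (f y - f u) < eps.
Proof.
  intros H eps He. unfold continuous in H.
  apply filterlim_locally with (eps := mkposreal eps He) in H.
  destruct H as [del Hd]. exists del. split. apply cond_pos.
  intros y Hy. apply ballR. apply Hd. apply ballR'. exact Hy.
Qed.
Lemma barrier (f : R -> R) (T K t1 : R) :
  f T <= K ->
  (forall u, T < u -> forall eps, 0 < eps -> exists del, 0 < del /\
      forall y, Rabs (y - u) < del -> Rabs (f y - f u) < eps) ->
  (forall u, T <= u -> forall eps, 0 < eps -> exists del, 0 < del /\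
      forall h, 0 < h < del -> Rabs (f (u+h) - f u) < eps) ->
  (forall u, T <= u -> f u = K -> exists del, 0 < del /\
      forall h, 0 < h < del -> f (u+h) < f u) ->
  T <= t1 -> f t1 <= K.
Proof.
  intros H0 Hc Hr Hd Ht1.
  destruct (Rle_or_lt (f t1) K) as [|Hgt]; [assumption|exfalso].
  set (E := fun u => T <= u <= t1 /\ f u <= K).
  assert (Hb : bound E) by (exists t1; intros u [[_ ?] _]; lra).
  assert (Hne : exists x, E x) by (exists T; unfold E; lra).
  destruct (completeness E Hb Hne) as [s [Hub Hlub]].
  assert (HTs : T <= s) by (apply Hub; unfold E; lra).
  assert (Hst1 : s <= t1) by (apply Hlub; intros u [[_ ?] _]; lra).
  assert (Hfs : f s <= K).
  { destruct (Rle_or_lt (f s) K) as [|Hlt]; [assumption|exfalso].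
    destruct (Req_dec s T) as [->|HsT]; [lra|].
    destruct (Hc s ltac:(lra) (f s - K) ltac:(lra)) as [del [Hdel P]].
    assert (s <= s - del/2); [|lra].
    apply Hlub. intros u [[Hu1 Hu2] Hu3].
    destruct (Rle_or_lt u (s - del/2)) as [|Hlt2]; [assumption|exfalso].
    assert (u <= s) by (apply Hub; unfold E; lra).
    assert (Rabs (u - s) < del) by (rewrite Rabs_left1; lra).
    specialize (P u H1). apply Rabs_def2 in P. lra. }
  assert (Hs1 : s < t1) by (destruct (Req_dec s t1); subst; lra).
  assert (Hloc : exists del, 0 < del /\ forall h, 0 < h < del -> f (s+h) <= K).
  { destruct (Req_dec (f s) K) as [Heq|Hneq].
    - destruct (Hd s HTs Heq) as [del [Hdel P]]. exists del; split; auto.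
      intros h Hh; specialize (P h Hh); lra.
    - destruct (Hr s HTs (K - f s) ltac:(lra)) as [del [Hdel P]].
      exists del; split; auto. intros h Hh; specialize (P h Hh).
      apply Rabs_def2 in P; lra. }
  destruct Hloc as [del [Hdel P]].
  set (h := Rmin (del/2) ((t1 - s)/2)).
  assert (Hh1 : 0 < h) by (apply Rmin_glb_lt; lra).
  assert (Hh2 : h <= del/2) by apply Rmin_l.
  assert (Hh3 : h <= (t1 - s)/2) by apply Rmin_r.
  assert (s + h <= s); [|lra].
  apply Hub. unfold E. split; [lra|]. apply P. lra.
Qed.

Lemma INR_ge3 d : (3 <= d)%nat -> 3 <= INR d.
Proof. intros H. apply le_INR in H. simpl in H. lra. Qed.

Section Traj.
Variables (d : nat) (lam mu : R) (a b c : R -> R).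
Hypothesis Hd : (3 <= d)%nat.
Hypothesis Hlam : 0 < lam.
Hypothesis Htr : trajectory d lam mu a b c.

Lemma tr_nonneg t : 0 <= t -> 0 <= a t /\ 0 <= b t /\ 0 <= c t.
Proof. destruct Htr as (_&_&_&H&_). apply H. Qed.

Lemma tr_cont_eps (f : R -> R) : (f = a \/ f = b \/ f = c) ->
  forall u, 0 < u -> forall eps, 0 < eps -> exists del, 0 < del /\
      forall y, Rabs (y - u) < del -> Rabs (f y - f u) < eps.
Proof.
  intros Hf u Hu. destruct Htr as (_&_&_&_&H&_). destruct (H u Hu) as (Ha&Hb&Hc).
  destruct Hf as [->|[->| ->]]; apply cont_eps; assumption.
Qed.

Lemma tr_rcont (f : R -> R) : (f = a \/ f = b \/ f = c) ->
  forall u, 0 <= u -> forall eps, 0 < eps -> exists del, 0 < del /\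
      forall h, 0 < h < del -> Rabs (f (u+h) - f u) < eps.
Proof.
  intros Hf u Hu. destruct Htr as (_&_&_&_&_&H). destruct (H u Hu) as (sa&sb&sc&_&_&_&Ha&Hb&Hc).
  destruct Hf as [->|[->| ->]]; eapply rd_rcont; eassumption.
Qed.

Lemma b_bound_K K : 1 / (3 * (1 + lam)) < K -> mu <= K -> forall t, 0 <= t -> b t <= K.
Proof.
  intros HK Hmu t Ht.
  destruct Htr as (_&Hb0&_&Hnn&_&Hder).
  apply (barrier b 0 K t); auto.
  - rewrite Hb0; auto.
  - intros u Hu; apply tr_cont_eps; auto.
  - apply tr_rcont; auto.
  - intros u Hu Hbu. destruct (Hder u Hu) as (sa&sb&sc&_&Hsb&_&_&Hrb&_).
    destruct (Hnn u Hu) as (Ha&Hb&Hc).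
    pose proof (INR_ge3 d Hd).
    assert (H3 : 1 < 3 * (1 + lam) * K).
    { apply Rmult_lt_compat_l with (r := 3 * (1+lam)) in HK; [|lra].
      replace (3 * (1 + lam) * (1 / (3 * (1 + lam)))) with 1 in HK by (field; lra). lra. }
    assert (Hg : 0 < g_v d lam (a u) (b u) (c u)).
    { unfold g_v, r_fun. rewrite Hbu.
      assert (0 <= (INR d - 2) * c u) by (apply Rmult_le_pos; lra).
      apply Rmult_lt_0_compat; [lra|]. nra. }
    assert (sb = 1) by (unfold sgn_set in Hsb; lra). subst sb.
    eapply rd_dec; [exact Hrb|].
    assert (0 < sqrt (b u)) by (apply sqrt_lt_R0; nra). lra.
Qed.

Lemma c_bound_K K : 1 / INR d < K -> mu <= K -> forall t, 0 <= t -> c t <= K.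
Proof.
  intros HK Hmu t Ht.
  destruct Htr as (_&_&Hc0&Hnn&_&Hder).
  pose proof (INR_ge3 d Hd).
  apply (barrier c 0 K t); auto.
  - rewrite Hc0; auto.
  - intros u Hu; apply tr_cont_eps; auto.
  - apply tr_rcont; auto.
  - intros u Hu Hcu. destruct (Hder u Hu) as (sa&sb&sc&_&_&Hsc&_&_&Hrc).
    destruct (Hnn u Hu) as (Ha&Hb&Hc).
    assert (H3 : 1 < INR d * K).
    { apply Rmult_lt_compat_l with (r := INR d) in HK; [|lra].
      replace (INR d * (1 / INR d)) with 1 in HK by (field; lra). lra. }
    assert (Hg : 0 < g_perp d lam (a u) (b u) (c u)).
    { unfold g_perp, r_fun. rewrite Hcu.
      assert (0 <= (1 + lam) * b u) by (apply Rmult_le_pos; lra).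
      nra. }
    assert (sc = 1) by (unfold sgn_set in Hsc; lra). subst sc.
    eapply rd_dec; [exact Hrc|].
    assert (0 < sqrt (c u)) by (apply sqrt_lt_R0; nra). lra.
Qed.

Hypothesis Hmub : mu <= 1 / (3 * (1 + lam)).
Hypothesis Hmuc : mu <= 1 / INR d.

Lemma b_bound t : 0 <= t -> b t <= 1 / (3 * (1 + lam)).
Proof.
  intros Ht. destruct (Rle_or_lt (b t) (1 / (3 * (1 + lam)))) as [|H]; auto.
  exfalso. assert (b t <= (b t + 1 / (3 * (1 + lam)))/2); [|lra].
  apply b_bound_K; auto; lra.
Qed.

Lemma c_bound t : 0 <= t -> c t <= 1 / INR d.
Proof.
  intros Ht. destruct (Rle_or_lt (c t) (1 / INR d)) as [|H]; auto.
  exfalso. assert (c t <= (c t + 1 / INR d)/2); [|lra].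
  apply c_bound_K; auto; lra.
Qed.

Variable rho : R.
Hypothesis Hrho : 0 < rho < 1 / 12.

Lemma a_bound_K T K : 0 <= T -> rho <= a T -> 0 < K < rho -> forall t, T <= t -> K <= a t.
Proof.
  intros HT HaT HK t Ht.
  destruct Htr as (_&_&_&Hnn&_&Hder).
  pose proof (INR_ge3 d Hd).
  assert (- a t <= - K); [|lra].
  apply (barrier (fun s => - a s) T (- K) t); auto.
  - lra.
  - intros u Hu eps He. destruct (tr_cont_eps a ltac:(auto) u ltac:(lra) eps He) as [del [Hdel P]].
    exists del; split; auto. intros y Hy. specialize (P y Hy).
    replace (- a y - - a u) with (- (a y - a u)) by ring. rewrite Rabs_Ropp; auto.
  - intros u Hu eps He. destruct (tr_rcont a ltac:(auto) u ltac:(lra) eps He) as [del [Hdel P]].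
    exists del; split; auto. intros y Hy. specialize (P y Hy).
    replace (- a (u+y) - - a u) with (- (a (u+y) - a u)) by ring. rewrite Rabs_Ropp; auto.
  - intros u Hu Hau. assert (Hau' : a u = K) by lra.
    assert (Hu0 : 0 <= u) by lra.
    destruct (Hder u Hu0) as (sa&sb&sc&Hsa&_&_&Hra&_&_).
    destruct (Hnn u Hu0) as (Ha&Hb&Hc).
    pose proof (b_bound u Hu0) as Hbb. pose proof (c_bound u Hu0) as Hcb.
    assert (Hb3 : (1 + lam) * b u <= 1/3).
    { apply Rmult_le_compat_l with (r := 1 + lam) in Hbb; [|lra].
      replace ((1 + lam) * (1 / (3 * (1 + lam)))) with (1/3) in Hbb by (field; lra). lra. }
    assert (Hc1 : (INR d - 2) * c u <= 1).
    { assert (INR d * c u <= 1).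
      { apply Rmult_le_compat_l with (r := INR d) in Hcb; [|lra].
        replace (INR d * (1 / INR d)) with 1 in Hcb by (field; lra). lra. }
      nra. }
    assert (Hg : g_w d lam (a u) (b u) (c u) < 0).
    { unfold g_w, r_fun. rewrite Hau'. lra. }
    assert (sa = -1) by (unfold sgn_set in Hsa; lra). subst sa.
    destruct (rd_inc a u _ Hra) as [del [Hdel P]].
    { assert (0 < sqrt (a u)) by (apply sqrt_lt_R0; lra). lra. }
    exists del; split; auto. intros h Hh. specialize (P h Hh). lra.
Qed.

Lemma a_bound T : 0 <= T -> rho <= a T -> forall t, T <= t -> rho <= a t.
Proof.
  intros HT HaT t Ht. destruct (Rle_or_lt rho (a t)) as [|H]; auto. exfalso.
  assert (0 <= a t) by (apply tr_nonneg; lra).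
  assert ((a t + rho)/2 <= a t); [|lra].
  apply (a_bound_K T); auto; lra.
Qed.

Lemma T2_facts t : Rbar_le (T2' rho a) (Finite t) ->
  exists T, T2' rho a = Finite T /\ 0 <= T /\ T <= t /\ rho <= a T.
Proof.
  intros Hle. unfold T2' in *.
  destruct (Glb_Rbar_correct (fun s => 0 <= s /\ rho <= a s)) as [Hlb Hglb].
  assert (H0 : Rbar_le (Finite 0) (Glb_Rbar (fun s => 0 <= s /\ rho <= a s))).
  { apply Hglb. intros x [Hx _]. simpl. auto. }
  destruct (Glb_Rbar (fun s => 0 <= s /\ rho <= a s)) as [T| |] eqn:EQ;
    simpl in Hle, H0; try contradiction.
  exists T. split; auto. split; auto. split; auto.
  destruct (Rle_or_lt rho (a T)) as [|Hlt]; auto. exfalso.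
  destruct (tr_rcont a ltac:(auto) T H0 (rho - a T) ltac:(lra)) as [del [Hdel P]].
  assert (Rbar_le (Finite (T + del/2)) (Finite T)) as HH; [|simpl in HH; lra].
  apply Hglb. intros x [Hx1 Hx2]. simpl.
  destruct (Rle_or_lt (T + del/2) x) as [|Hx]; auto. exfalso.
  assert (Rbar_le (Finite T) (Finite x)) as HT by (apply Hlb; split; auto).
  simpl in HT. destruct (Req_dec x T) as [->|Hne]; [lra|].
  specialize (P (x - T) ltac:(lra)). replace (T + (x - T)) with x in P by ring.
  apply Rabs_def2 in P. lra.
Qed.

End Traj.

Lemma align_bound (dm2 rho a b c B C : R) : 0 < rho -> rho <= a -> 0 <= b <= B ->
  0 < dm2 -> dm2 * c ^ 2 <= C ->
  1 - a / sqrt (a ^ 2 + b ^ 2 + dm2 * c ^ 2) <= 1 / (2 * rho ^ 2) * (B ^ 2 + C).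
Proof.
  intros Hr Ha Hb Hdm HC.
  set (S := b ^ 2 + dm2 * c ^ 2).
  assert (HS0 : 0 <= S) by (unfold S; assert (0 <= c^2) by (apply pow2_ge_0); nra).
  assert (HS1 : S <= B ^ 2 + C) by (unfold S; nra).
  replace (a ^ 2 + b ^ 2 + dm2 * c ^ 2) with (a^2 + S) by (unfold S; ring).
  set (q := sqrt (a ^ 2 + S)).
  assert (Hq2 : q * q = a ^ 2 + S) by (unfold q; apply sqrt_sqrt; nra).
  assert (Hq0 : 0 <= q) by (unfold q; apply sqrt_pos).
  assert (Hqa : a <= q) by nra.
  assert (E1 : 1 - a / q = S / (q * (q + a))).
  { replace S with (q * q - a ^ 2) by lra. field; split; nra. }
  rewrite E1.
  apply Rle_trans with (S / (2 * a ^ 2)).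
  - unfold Rdiv. apply Rmult_le_compat_l; auto. apply Rinv_le_contravar; nra.
  - apply Rle_trans with ((B^2 + C) / (2 * a^2)).
    + unfold Rdiv. apply Rmult_le_compat_r; auto. left; apply Rinv_0_lt_compat; nra.
    + replace (1 / (2 * rho ^ 2) * (B ^ 2 + C)) with ((B^2 + C) / (2 * rho^2)) by (field; lra).
      unfold Rdiv. apply Rmult_le_compat_l; [nra|]. apply Rinv_le_contravar; nra.
Qed.

Lemma mu_small d lam r0 : (3 <= d)%nat -> 0 < lam -> Rabs r0 < 1/3 ->
  mu_of d lam r0 <= 1 / (3 * (1 + lam)) /\ mu_of d lam r0 <= 1 / INR d.
Proof.
  intros Hd Hl Hr. pose proof (INR_ge3 d Hd). apply Rabs_def2 in Hr.
  unfold mu_of. set (n := INR d) in *.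
  assert (E : r0 / (n + lam) * (n + lam) = r0) by (field; lra).
  set (m := r0 / (n + lam)) in *.
  split.
  - apply Rmult_le_reg_r with (3 * (1 + lam)); [lra|].
    replace (1 / (3 * (1 + lam)) * (3 * (1 + lam))) with 1 by (field; lra).
    destruct (Rle_or_lt m 0); nra.
  - apply Rmult_le_reg_r with n; [lra|].
    replace (1 / n * n) with 1 by (field; lra).
    destruct (Rle_or_lt m 0); nra.
Qed.

Lemma main_d d lam rho a b c t : (3 <= d)%nat -> 0 < lam -> 0 < rho < 1/12 ->
  forall mu, mu <= 1 / (3 * (1 + lam)) -> mu <= 1 / INR d ->
  trajectory d lam mu a b c -> Rbar_le (T2' rho a) (Finite t) ->
         rho <= a t /\
         b t <= 1 / (3 * (1 + lam)) /\
         (INR d - 2) * c t ^ 2 <= 1 / (INR d - 2) /\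
         1 - Align d a b c t
           <= 1 / (2 * rho ^ 2) * (1 / (9 * (1 + lam) ^ 2) + 1 / (INR d - 2)).
Proof.
  intros Hd Hl Hr mu Hm1 Hm2 Htr Hle.
  destruct (T2_facts d lam mu a b c Htr rho t Hle) as (T & _ & HT0 & HTt & HaT).
  assert (Ht0 : 0 <= t) by lra.
  pose proof (INR_ge3 d Hd).
  pose proof (tr_nonneg d lam mu a b c Htr t Ht0) as (Ha&Hb&Hc).
  assert (HA : rho <= a t) by (apply (a_bound d lam mu a b c) with (T := T); auto).
  assert (HB : b t <= 1 / (3 * (1 + lam))) by (apply (b_bound d lam mu a b c); auto).
  assert (HCc : c t <= 1 / INR d) by (apply (c_bound d lam mu a b c); auto).
  assert (HC : (INR d - 2) * c t ^ 2 <= 1 / (INR d - 2)).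
  { assert (Hcn : c t * INR d <= 1).
    { apply Rmult_le_compat_r with (r := INR d) in HCc; [|lra].
      replace (1 / INR d * INR d) with 1 in HCc by (field; lra). lra. }
    apply Rmult_le_reg_r with (INR d - 2); [lra|].
    replace (1 / (INR d - 2) * (INR d - 2)) with 1 by (field; lra).
    assert (0 <= c t * INR d) by nra.
    assert ((c t * INR d) ^ 2 <= 1) by nra.
    assert ((INR d - 2) * c t ^ 2 * (INR d - 2) <= (c t * INR d)^2); [|lra].
    assert (0 <= c t ^ 2) by apply pow2_ge_0.
    replace ((c t * INR d)^2) with (c t ^ 2 * INR d ^ 2) by ring.
    assert ((INR d - 2) * (INR d - 2) <= INR d ^ 2) by nra. nra. }
  split; [auto|split; [auto|split; [auto|]]].
  unfold Align.
  replace (1 / (9 * (1 + lam) ^ 2)) with ((1 / (3 * (1 + lam))) ^ 2) by (field; lra).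
  apply align_bound; auto; lra.
Qed.

Theorem propositionC4
  (rho0 : nat -> R) (Hrho0 : is_lim_seq rho0 0)
  (rho : R) (Hrho : 0 < rho < 1 / 12) :
  (exists D : nat, forall d : nat, (D <= d)%nat -> (3 <= d)%nat ->
     forall lam : R, 0 < lam ->
     forall a b c : R -> R,
       trajectory d lam (mu_of d lam (rho0 d)) a b c ->
       forall t : R, Rbar_le (T2' rho a) (Finite t) ->
         rho <= a t /\
         b t <= 1 / (3 * (1 + lam)) /\
         (INR d - 2) * c t ^ 2 <= 1 / (INR d - 2) /\
         1 - Align d a b c t
           <= 1 / (2 * rho ^ 2) * (1 / (9 * (1 + lam) ^ 2) + 1 / (INR d - 2)))
  /\
  (forall lam : nat -> R, (forall d, 0 < lam d) -> is_lim_seq lam p_infty ->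
     forall eps : R, 0 < eps ->
     exists D : nat, forall d : nat, (D <= d)%nat -> (3 <= d)%nat ->
     forall a b c : R -> R,
       trajectory d (lam d) (mu_of d (lam d) (rho0 d)) a b c ->
       forall t : R, Rbar_le (T2' rho a) (Finite t) ->
         1 - Align d a b c t <= eps).
Proof.
  apply is_lim_seq_spec in Hrho0.
  destruct (Hrho0 (mkposreal (1/3) ltac:(lra))) as [D1 HD1]. simpl in HD1.
  assert (P1 : forall d, (D1 <= d)%nat -> (3 <= d)%nat ->
     forall lam : R, 0 < lam ->
     forall a b c : R -> R,
       trajectory d lam (mu_of d lam (rho0 d)) a b c ->
       forall t : R, Rbar_le (T2' rho a) (Finite t) ->
         rho <= a t /\
         b t <= 1 / (3 * (1 + lam)) /\
         (INR d - 2) * c t ^ 2 <= 1 / (INR d - 2) /\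
         1 - Align d a b c t
           <= 1 / (2 * rho ^ 2) * (1 / (9 * (1 + lam) ^ 2) + 1 / (INR d - 2))).
  { intros d HdD Hd lam Hl a b c Htr t Ht.
    specialize (HD1 d HdD). rewrite Rminus_0_r in HD1.
    destruct (mu_small d lam (rho0 d) Hd Hl HD1) as [m1 m2].
    eapply main_d; eauto. }
  split; [exists D1; exact P1|].
  intros lam Hlam Hlim eps He.
  set (M := 1 / (rho ^ 2 * eps)).
  assert (HM : 0 < M) by (unfold M; apply Rdiv_lt_0_compat; [lra|]; apply Rmult_lt_0_compat; nra).
  apply is_lim_seq_spec in Hlim. destruct (Hlim M) as [D2 HD2].
  pose proof is_lim_seq_INR as Hn. apply is_lim_seq_spec in Hn.
  destruct (Hn (M + 2)) as [D3 HD3].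
  exists (max D1 (max D2 D3)). intros d Hd H3 a b c Htr t Ht.
  assert (Hd1 : (D1 <= d)%nat) by lia.
  assert (Hd2 : (D2 <= d)%nat) by lia.
  assert (Hd3 : (D3 <= d)%nat) by lia.
  destruct (P1 d Hd1 H3 (lam d) (Hlam d) a b c Htr t Ht) as (_&_&_&Hal).
  eapply Rle_trans; [exact Hal|].
  specialize (HD2 d Hd2). specialize (HD3 d Hd3). pose proof (Hlam d) as Hl.
  set (l := lam d) in *. set (n := INR d) in *.
  assert (Hre : 0 < rho ^ 2 * eps) by (apply Rmult_lt_0_compat; nra).
  assert (HMe : M * (rho ^ 2 * eps) = 1) by (unfold M; field; lra).
  assert (T1 : 1 / (9 * (1 + l) ^ 2) <= rho ^ 2 * eps).
  { apply Rle_trans with (1 / l).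
    - unfold Rdiv. rewrite !Rmult_1_l. apply Rinv_le_contravar; nra.
    - apply Rmult_le_reg_r with l; [lra|].
      replace (1 / l * l) with 1 by (field; lra). nra. }
  assert (T2 : 1 / (n - 2) <= rho ^ 2 * eps).
  { apply Rmult_le_reg_r with (n - 2); [lra|].
    replace (1 / (n - 2) * (n - 2)) with 1 by (field; lra). nra. }
  apply Rle_trans with (1 / (2 * rho ^ 2) * (2 * (rho ^ 2 * eps))).
  - apply Rmult_le_compat_l; [|lra].
    left; apply Rdiv_lt_0_compat; nra.
  - right; field; lra.
Qed.
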